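(* The following hold: $$\alpha(4)=1,\qquad \alpha(3)\ge \tfrac12,\qquad \beta(4)\ge \tfrac13,\qquad \beta(3)\ge \tfrac14.$$
   Context: A set $S$ of positive integers is called $n$-free if its elements can be arranged in a sequence, each element appearing exactly once, that contains no $n$-term arithmetic progression as a subsequence. The sequence is a finite permutation if $S$ is finite, and a sequence indexed by the positive integers if $S$ is infinite. A sequence contains an $n$-term arithmetic progression as a subsequence if there are positions $i_1<\cdots<i_n$ whose entries satisfy $a_{i_{m+1}}-a_{i_m}=d$ for all $m$, for some fixed $d\ne0$ (positive or negative). For $S\subseteq\mathbb{Z}_{>0}$, let $A(n)=|S\cap[1,n]|$. The upper density is $\overline{d}(S)=\limsup_{n\to\infty}A(n)/n$ and the lower density is $\underline{d}(S)=\liminf_{n\to\infty}A(n)/n$. For $n\ge3$, define $$\alpha(n)=\sup\{\overline{d}(S): S \text{ is } n\text{-free}\},\qquad \beta(n)=\sup\{\underline{d}(S): S \text{ is } n\text{-free}\}.$$ *)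

(* Defs.v *)
From Stdlib Require Import Reals ZArith List Lia.
Open Scope R_scope.

(* A set S of positive integers is represented by its characteristic
   function S : nat -> bool, with S 0 = false. *)
Definition pos_set (S : nat -> bool) : Prop := S 0%nat = false.

(* The sequence f (indexed by nat) contains an n-term arithmetic
   progression (common difference d <> 0, any sign) as a subsequence,
   using only positions satisfying [ok] (all positions for infinite
   sequences, positions < length for finite lists). *)
Definition has_AP_on (n : nat) (ok : nat -> Prop) (f : nat -> Z) : Prop :=
  exists (idx : nat -> nat) (d : Z),
    d <> 0%Z /\
    (forall m, (m < n)%nat -> ok (idx m)) /\
    (forall m, (S m < n)%nat -> (idx m < idx (S m))%nat) /\
    (forall m, (S m < n)%nat -> (f (idx (S m)) - f (idx m))%Z = d).

Definition list_arrangement_free (n : nat) (S : nat -> bool) : Prop :=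
  exists l : list nat,
    NoDup l /\ (forall x, In x l <-> S x = true) /\
    ~ has_AP_on n (fun i => (i < length l)%nat) (fun i => Z.of_nat (nth i l 0%nat)).

(* Infinite arrangement: a sequence indexed by the positive integers
   (here shifted to start at 0) in which each element of S appears
   exactly once. *)
Definition seq_arrangement_free (n : nat) (S : nat -> bool) : Prop :=
  exists a : nat -> nat,
    (forall i j, a i = a j -> i = j) /\
    (forall x, S x = true <-> exists i, a i = x) /\
    ~ has_AP_on n (fun _ => True) (fun i => Z.of_nat (a i)).

(* S is n-free.  A finite set can only be arranged as a list and an
   infinite set only as an injective sequence, so the disjunction
   matches the paper's case distinction. *)
Definition n_free (n : nat) (S : nat -> bool) : Prop :=
  pos_set S /\ (list_arrangement_free n S \/ seq_arrangement_free n S).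

Definition count_upto (S : nat -> bool) (N : nat) : nat :=
  length (filter S (seq 1 N)).
Definition dens_seq (S : nat -> bool) (N : nat) : R :=
  INR (count_upto S N) / INR N.

Definition is_limsup (u : nat -> R) (l : R) : Prop :=
  (forall eps, eps > 0 -> exists N, forall k, (k >= N)%nat -> u k < l + eps) /\
  (forall eps, eps > 0 -> forall N, exists k, (k >= N)%nat /\ u k > l - eps).
Definition is_liminf (u : nat -> R) (l : R) : Prop :=
  (forall eps, eps > 0 -> exists N, forall k, (k >= N)%nat -> u k > l - eps) /\
  (forall eps, eps > 0 -> forall N, exists k, (k >= N)%nat /\ u k < l + eps).

Definition upper_density (S : nat -> bool) (x : R) : Prop := is_limsup (dens_seq S) x.
Definition lower_density (S : nat -> bool) (x : R) : Prop := is_liminf (dens_seq S) x.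

Definition is_alpha (n : nat) (a : R) : Prop :=
  is_lub (fun x => exists S, n_free n S /\ upper_density S x) a.
Definition is_beta (n : nat) (b : R) : Prop :=
  is_lub (fun x => exists S, n_free n S /\ lower_density S x) b.

(* Main.v *)
Require Import Defs.
From Stdlib Require Import Reals.
From Stdlib Require Import Lra Lia ZArith Arith List ClassicalEpsilon Classical.
Open Scope R_scope.

Local Open Scope nat_scope.

Fixpoint pm (f K j : nat) : nat :=
  match f with
  | O => O
  | S f' => if K <=? 1 then O
            else if j <? K - K/2 then 2 * pm f' (K - K/2) j
            else 2 * pm f' (K/2) (j - (K - K/2)) + 1
  end.

Lemma pm_props : forall f K, K <= f ->
  (forall j, j < K -> pm f K j < K) /\
  (forall x, x < K -> exists j, j < K /\ pm f K j = x) /\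
  (forall j j', j < K -> j' < K -> pm f K j = pm f K j' -> j = j') /\
  (forall j1 j2 j3, j1 < j2 -> j2 < j3 -> j3 < K -> pm f K j1 + pm f K j3 <> 2 * pm f K j2).
Proof.
  induction f as [|f IH]; intros K HK.
  - repeat split; intros; lia.
  - cbn [pm]. destruct (Nat.leb_spec K 1) as [HK1|HK1].
    + repeat split; intros; try lia. exists 0; lia.
    + assert (Hdm := Nat.div_mod_eq K 2).
      assert (Hmb := Nat.mod_upper_bound K 2 ltac:(lia)).
      remember (K/2) as l eqn:El. remember (K - l) as h eqn:Eh.
      destruct (IH h ltac:(lia)) as [Ah [Bh [Ch Dh]]].
      destruct (IH l ltac:(lia)) as [Al [Bl [Cl Dl]]].
      repeat split.
      * intros j Hj. destruct (Nat.ltb_spec j h).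
        -- specialize (Ah j H). lia.
        -- specialize (Al (j-h) ltac:(lia)). lia.
      * intros x Hx. pose proof (Nat.div_mod_eq x 2) as Ex.
        pose proof (Nat.mod_upper_bound x 2 ltac:(lia)) as Mx.
        destruct (Nat.eq_dec (x mod 2) 0) as [E0|E1].
        -- destruct (Bh (x/2) ltac:(lia)) as [j [Hj Hpj]]. exists j. split. lia.
           destruct (Nat.ltb_spec j h); lia.
        -- destruct (Bl (x/2) ltac:(lia)) as [j [Hj Hpj]]. exists (h + j). split. lia.
           destruct (Nat.ltb_spec (h+j) h); try lia. replace (h + j - h) with j by lia. lia.
      * intros j j' Hj Hj'. destruct (Nat.ltb_spec j h); destruct (Nat.ltb_spec j' h); intros E.
        -- apply Ch; lia.
        -- lia.
        -- lia.
        -- assert (j - h = j' - h) by (apply Cl; lia). lia.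
      * intros j1 j2 j3 H12 H23 H3.
        destruct (Nat.ltb_spec j1 h); destruct (Nat.ltb_spec j2 h); destruct (Nat.ltb_spec j3 h); try lia.
        -- pose proof (Dh j1 j2 j3 ltac:(lia) ltac:(lia) ltac:(lia)). lia.
        -- pose proof (Dl (j1-h) (j2-h) (j3-h) ltac:(lia) ltac:(lia) ltac:(lia)). lia.
Qed.

Fixpoint P (sz : nat -> nat) (b : nat) : nat :=
  match b with O => O | S b' => P sz b' + sz b' end.

Fixpoint dec (sz : nat -> nat) (i : nat) : nat * nat :=
  match i with
  | O => (O, O)
  | S i' => let (b, j) := dec sz i' in if S j <? sz b then (b, S j) else (S b, O)
  end.

Lemma dec_spec sz (Hsz : forall b, 1 <= sz b) i :
  forall b j, dec sz i = (b,j) -> j < sz b /\ i = P sz b + j.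
Proof.
  induction i as [|i IH]; simpl; intros b j E.
  - inversion E; subst. split. apply Hsz. simpl. lia.
  - destruct (dec sz i) as [b0 j0] eqn:E0. destruct (IH b0 j0 eq_refl) as [H1 H2].
    destruct (Nat.ltb_spec (S j0) (sz b0)); inversion E; subst; simpl; split; try lia.
    apply Hsz.
Qed.

Lemma P_mono sz b b' : b < b' -> P sz b + sz b <= P sz b'.
Proof.
  induction b' as [|b' IH]; intros H; [lia|]. simpl.
  destruct (Nat.eq_dec b b'); [subst; lia|]. specialize (IH ltac:(lia)). lia.
Qed.

Lemma P_uniq sz b j b' j' : j < sz b -> j' < sz b' -> P sz b + j = P sz b' + j' -> b = b' /\ j = j'.
Proof.
  intros Hj Hj' E. destruct (lt_eq_lt_dec b b') as [[Hl|He]|Hl].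
  - pose proof (P_mono sz b b' Hl). lia.
  - subst. lia.
  - pose proof (P_mono sz b' b Hl). lia.
Qed.

Lemma dec_order sz (Hsz : forall b, 1 <= sz b) i i' b j b' j' :
  i < i' -> dec sz i = (b,j) -> dec sz i' = (b',j') -> b < b' \/ (b = b' /\ j < j').
Proof.
  intros H E E'. apply dec_spec in E; auto. apply dec_spec in E'; auto.
  destruct (lt_eq_lt_dec b b') as [[Hl|He]|Hl].
  - left; auto.
  - subst. right. lia.
  - pose proof (P_mono sz b' b Hl). lia.
Qed.

Lemma dec_P sz (Hsz : forall b, 1 <= sz b) b j : j < sz b -> dec sz (P sz b + j) = (b, j).
Proof.
  intros Hj. destruct (dec sz (P sz b + j)) as [b' j'] eqn:E.
  apply dec_spec in E; auto. destruct E as [H1 H2].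
  destruct (P_uniq sz b j b' j' Hj H1 H2). subst. auto.
Qed.

Section Blocks.
Variables lo sz : nat -> nat.
Hypothesis Hsz : forall b, 1 <= sz b.
Hypothesis Hlo0 : 1 <= lo 0.
Hypothesis Hgap : forall b, 2 * (lo b + sz b) <= lo (S b).

Definition g b j := lo b + pm (sz b) (sz b) j.
Definition arr i := let (b, j) := dec sz i in g b j.
Definition inS x : Prop := exists b, lo b <= x < lo b + sz b.
Definition Sb x : bool := if excluded_middle_informative (inS x) then true else false.

Lemma Sb_true x : Sb x = true <-> inS x.
Proof. unfold Sb. destruct (excluded_middle_informative (inS x)); split; intros; auto; discriminate. Qed.

Lemma hi_lo b b' : b < b' -> 2 * (lo b + sz b) <= lo b'.
Proof.
  induction b' as [|b' IH]; intros H; [lia|].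
  destruct (Nat.eq_dec b b'); [subst; apply Hgap|].
  specialize (IH ltac:(lia)). specialize (Hgap b'). lia.
Qed.

Lemma lo_pos b : 1 <= lo b.
Proof. destruct b; auto. pose proof (hi_lo 0 (S b) ltac:(lia)). lia. Qed.

Lemma g_range b j : j < sz b -> lo b <= g b j < lo b + sz b.
Proof.
  intros Hj. unfold g. destruct (pm_props (sz b) (sz b) (le_n _)) as [A _].
  specialize (A j Hj). lia.
Qed.

Lemma arr_dec i b j : dec sz i = (b,j) -> arr i = g b j /\ j < sz b.
Proof. intros E. unfold arr. rewrite E. split; auto. apply (dec_spec sz Hsz i b j E). Qed.

Lemma arr_inj i i' : arr i = arr i' -> i = i'.
Proof.
  intros E.
  destruct (dec sz i) as [b j] eqn:Ei. destruct (dec sz i') as [b' j'] eqn:Ei'.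
  destruct (arr_dec _ _ _ Ei) as [A1 A2]. destruct (arr_dec _ _ _ Ei') as [A1' A2'].
  pose proof (g_range b j A2). pose proof (g_range b' j' A2').
  assert (b = b').
  { destruct (lt_eq_lt_dec b b') as [[Hl|He]|Hl]; auto.
    - pose proof (hi_lo b b' Hl). lia.
    - pose proof (hi_lo b' b Hl). lia. }
  subst b'. assert (j = j').
  { destruct (pm_props (sz b) (sz b) (le_n _)) as [_ [_ [C _]]]. apply C; auto.
    unfold g in *. lia. }
  subst j'. apply dec_spec in Ei; auto. apply dec_spec in Ei'; auto. lia.
Qed.

Lemma arr_range x : Sb x = true <-> exists i, arr i = x.
Proof.
  rewrite Sb_true. split.
  - intros [b Hb]. destruct (pm_props (sz b) (sz b) (le_n _)) as [_ [B _]].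
    destruct (B (x - lo b) ltac:(lia)) as [j [Hj Hpj]].
    exists (P sz b + j). destruct (arr_dec (P sz b + j) b j (dec_P sz Hsz b j Hj)) as [A1 _].
    rewrite A1. unfold g. lia.
  - intros [i Hi]. destruct (dec sz i) as [b j] eqn:Ei.
    destruct (arr_dec _ _ _ Ei) as [A1 A2]. exists b. pose proof (g_range b j A2). lia.
Qed.

Lemma Sb0 : Sb 0 = false.
Proof.
  destruct (Sb 0) eqn:E; auto. apply Sb_true in E. destruct E as [b Hb].
  pose proof (lo_pos b). lia.
Qed.

Lemma same_block i0 i1 i2 b j0 j1 j2 :
  dec sz i0 = (b,j0) -> dec sz i1 = (b,j1) -> dec sz i2 = (b,j2) ->
  j0 < j1 -> j1 < j2 -> arr i0 + arr i2 <> 2 * arr i1.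
Proof.
  intros E0 E1 E2 H01 H12.
  destruct (arr_dec _ _ _ E0) as [A0 B0]. destruct (arr_dec _ _ _ E1) as [A1 B1].
  destruct (arr_dec _ _ _ E2) as [A2 B2]. rewrite A0, A1, A2. unfold g.
  destruct (pm_props (sz b) (sz b) (le_n _)) as [_ [_ [_ D]]].
  pose proof (D j0 j1 j2 H01 H12 B2). lia.
Qed.

Lemma jump i0 i1 i2 b1 j1 b2 j2 :
  dec sz i1 = (b1,j1) -> dec sz i2 = (b2,j2) -> b1 < b2 ->
  arr i0 + arr i2 <> 2 * arr i1.
Proof.
  intros E1 E2 H.
  destruct (arr_dec _ _ _ E1) as [A1 B1]. destruct (arr_dec _ _ _ E2) as [A2 B2].
  pose proof (g_range _ _ B1). pose proof (g_range _ _ B2). pose proof (hi_lo _ _ H). lia.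
Qed.

Lemma get3 n (Hn : 3 <= n) (H : has_AP_on n (fun _ => True) (fun i => Z.of_nat (arr i))) :
  exists idx : nat -> nat,
    idx 0 < idx 1 /\ idx 1 < idx 2 /\ arr (idx 0) + arr (idx 2) = 2 * arr (idx 1) /\
    (4 <= n -> idx 2 < idx 3 /\ arr (idx 1) + arr (idx 3) = 2 * arr (idx 2)).
Proof.
  destruct H as [idx [d [Hd [_ [Hinc Hdiff]]]]].
  exists idx.
  pose proof (Hinc 0 ltac:(lia)). pose proof (Hinc 1 ltac:(lia)).
  pose proof (Hdiff 0 ltac:(lia)). pose proof (Hdiff 1 ltac:(lia)).
  split; [lia|]. split; [lia|]. split; [lia|].
  intros H4. pose proof (Hinc 2 ltac:(lia)). pose proof (Hdiff 2 ltac:(lia)). split; lia.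
Qed.

Theorem blocks_4free : n_free 4 Sb.
Proof.
  split. { apply Sb0. } right. exists arr. split; [exact arr_inj|]. split; [exact arr_range|].
  intros H. destruct (get3 4 ltac:(lia) H) as [idx [H01 [H12 [E1 H4]]]].
  destruct (H4 (le_n _)) as [H23 E2].
  destruct (dec sz (idx 0)) as [b0 j0] eqn:D0. destruct (dec sz (idx 1)) as [b1 j1] eqn:D1.
  destruct (dec sz (idx 2)) as [b2 j2] eqn:D2. destruct (dec sz (idx 3)) as [b3 j3] eqn:D3.
  destruct (dec_order sz Hsz _ _ _ _ _ _ H12 D1 D2) as [L12|[Q12 L12]].
  { exact (jump _ _ _ _ _ _ _ D1 D2 L12 E1). }
  destruct (dec_order sz Hsz _ _ _ _ _ _ H23 D2 D3) as [L23|[Q23 L23]].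
  { exact (jump _ _ _ _ _ _ _ D2 D3 L23 E2). }
  subst. exact (same_block _ _ _ _ _ _ _ D1 D2 D3 L12 L23 E2).
Qed.

Hypothesis H3 : forall b b', b < b' -> lo b' + sz b' + lo b + sz b <= 2 * lo b' + 1.

Theorem blocks_3free : n_free 3 Sb.
Proof.
  split. { apply Sb0. } right. exists arr. split; [exact arr_inj|]. split; [exact arr_range|].
  intros H. destruct (get3 3 ltac:(lia) H) as [idx [H01 [H12 [E1 _]]]].
  destruct (dec sz (idx 0)) as [b0 j0] eqn:D0. destruct (dec sz (idx 1)) as [b1 j1] eqn:D1.
  destruct (dec sz (idx 2)) as [b2 j2] eqn:D2.
  destruct (dec_order sz Hsz _ _ _ _ _ _ H12 D1 D2) as [L12|[Q12 L12]].
  { exact (jump _ _ _ _ _ _ _ D1 D2 L12 E1). }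
  subst b2.
  destruct (dec_order sz Hsz _ _ _ _ _ _ H01 D0 D1) as [L01|[Q01 L01]].
  - destruct (arr_dec _ _ _ D0) as [A0 B0]. destruct (arr_dec _ _ _ D1) as [A1 B1].
    destruct (arr_dec _ _ _ D2) as [A2 B2].
    pose proof (g_range _ _ B0). pose proof (g_range _ _ B1). pose proof (g_range _ _ B2).
    pose proof (H3 _ _ L01). lia.
  - subst. exact (same_block _ _ _ _ _ _ _ D0 D1 D2 L01 L12 E1).
Qed.

End Blocks.

Lemma C_step T N : count_upto T (S N) = count_upto T N + (if T (S N) then 1 else 0).
Proof.
  unfold count_upto. rewrite seq_S, filter_app, length_app.
  replace (1 + N) with (S N) by lia. simpl. destruct (T (S N)); simpl; lia.
Qed.

Lemma C_full T a r : (forall x, a < x <= a + r -> T x = true) ->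
  count_upto T (a + r) = count_upto T a + r.
Proof.
  induction r as [|r IH]; intros H.
  - rewrite Nat.add_0_r. lia.
  - rewrite Nat.add_succ_r, C_step, IH by (intros; apply H; lia).
    rewrite (H (S (a + r))) by lia. lia.
Qed.

Lemma C_mono T a b : a <= b -> count_upto T a <= count_upto T b.
Proof.
  induction 1; auto. rewrite C_step. lia.
Qed.

Lemma C_le T N : count_upto T N <= N.
Proof.
  unfold count_upto. rewrite <- (length_seq N 1) at 2. apply filter_length_le.
Qed.

Section BlockCount.
Variables lo sz : nat -> nat.
Hypothesis Hsz : forall b, 1 <= sz b.
Hypothesis Hlo0 : 1 <= lo 0.
Hypothesis Hgap : forall b, 2 * (lo b + sz b) <= lo (S b).

Lemma C_in_block b k : lo b <= k < lo b + sz b ->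
  count_upto (Sb lo sz) k = count_upto (Sb lo sz) (lo b - 1) + (k - lo b + 1).
Proof.
  intros Hk. pose proof (lo_pos lo sz Hlo0 Hgap b).
  replace k with ((lo b - 1) + (k - lo b + 1)) at 1 by lia.
  apply C_full. intros x Hx. apply Sb_true. exists b. lia.
Qed.

Lemma C_block_end b :
  count_upto (Sb lo sz) (lo b + sz b - 1) = count_upto (Sb lo sz) (lo b - 1) + sz b.
Proof.
  pose proof (Hsz b). rewrite (C_in_block b (lo b + sz b - 1)) by lia. f_equal. lia.
Qed.

Lemma find_block k : lo 0 <= k -> exists b, lo b <= k < lo (S b).
Proof.
  induction k as [|k IH]; intros H; [lia|].
  destruct (Nat.eq_dec (S k) (lo 0)) as [E|E].
  - exists 0. pose proof (Hgap 0). pose proof (Hsz 0). lia.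
  - destruct (IH ltac:(lia)) as [b Hb].
    destruct (Nat.eq_dec (S k) (lo (S b))) as [E2|E2].
    + exists (S b). pose proof (Hgap (S b)). pose proof (Hsz (S b)). lia.
    + exists b. lia.
Qed.

End BlockCount.

Definition loX b := 2 * 3 ^ b.
Definition szX b := 3 ^ b.
Lemma pow3_pos b : 1 <= 3 ^ b.
Proof. pose proof (Nat.pow_le_mono_r 3 0 b ltac:(lia) ltac:(lia)). simpl in H. lia. Qed.
Lemma X_sz b : 1 <= szX b. Proof. apply pow3_pos. Qed.
Lemma X_lo0 : 1 <= loX 0. Proof. unfold loX; simpl; lia. Qed.
Lemma X_gap b : 2 * (loX b + szX b) <= loX (S b).
Proof. unfold loX, szX. change (3 ^ S b) with (3 * 3 ^ b). lia. Qed.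
Lemma X_H3 b b' : b < b' -> loX b' + szX b' + loX b + szX b <= 2 * loX b' + 1.
Proof.
  intros H. unfold loX, szX. pose proof (Nat.pow_le_mono_r 3 (S b) b' ltac:(lia) H).
  change (3 ^ S b) with (3 * 3 ^ b) in H0. lia.
Qed.

Notation CX := (count_upto (Sb loX szX)).

Lemma XA b : 3 ^ b <= 2 * CX (2 * 3 ^ b - 1) + 1.
Proof.
  induction b as [|b IH]; [simpl; lia|].
  pose proof (C_block_end loX szX X_sz X_lo0 X_gap b) as E. change (loX b) with (2*3^b) in E; change (szX b) with (3^b) in E.
  pose proof (pow3_pos b).
  pose proof (C_mono (Sb loX szX) (2 * 3 ^ b + 3 ^ b - 1) (2 * 3 ^ S b - 1)) as M.
  change (3 ^ S b) with (3 * 3 ^ b) in *. specialize (M ltac:(lia)). lia.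
Qed.

Lemma XU b : 3 ^ (S b) - 1 <= 2 * CX (3 ^ (S b) - 1).
Proof.
  pose proof (C_block_end loX szX X_sz X_lo0 X_gap b) as E. change (loX b) with (2*3^b) in E; change (szX b) with (3^b) in E.
  pose proof (XA b). change (3 ^ S b) with (3 * 3 ^ b).
  replace (3 * 3 ^ b - 1) with (2 * 3 ^ b + 3 ^ b - 1) by lia. lia.
Qed.

Lemma XB k : 2 <= k -> k <= 4 * CX k + 2.
Proof.
  intros Hk. destruct (find_block loX szX X_sz X_lo0 X_gap k Hk) as [b Hb].
  pose proof (XA b). pose proof (pow3_pos b). unfold loX in Hb. change (3 ^ S b) with (3 * 3 ^ b) in Hb.
  destruct (Nat.lt_ge_cases k (2 * 3 ^ b + 3 ^ b)) as [Hl|Hl].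
  - pose proof (C_in_block loX szX X_lo0 X_gap b k) as E. change (loX b) with (2*3^b) in E; change (szX b) with (3^b) in E.
    specialize (E ltac:(lia)). lia.
  - pose proof (C_block_end loX szX X_sz X_lo0 X_gap b) as E. change (loX b) with (2*3^b) in E; change (szX b) with (3^b) in E.
    pose proof (C_mono (Sb loX szX) (2 * 3 ^ b + 3 ^ b - 1) k ltac:(lia)). lia.
Qed.

Definition loY c b := (2 * c) ^ b.
Definition szY c b := (c - 1) * (2 * c) ^ b.
Lemma powc_pos c b : 1 <= c -> 1 <= (2 * c) ^ b.
Proof. intros H. pose proof (Nat.pow_le_mono_r (2*c) 0 b ltac:(lia) ltac:(lia)). rewrite Nat.pow_0_r in H0. lia. Qed.
Lemma Y_sz c : 2 <= c -> forall b, 1 <= szY c b.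
Proof. intros H b. unfold szY. pose proof (powc_pos c b ltac:(lia)). nia. Qed.
Lemma Y_lo0 c : 1 <= loY c 0. Proof. unfold loY; simpl; lia. Qed.
Lemma Y_gap c : 2 <= c -> forall b, 2 * (loY c b + szY c b) <= loY c (S b).
Proof. intros H b. unfold loY, szY. change ((2*c) ^ S b) with (2 * c * (2 * c) ^ b).
  set (X := (2*c)^b). destruct c as [|c]; [lia|]. replace (S c - 1) with c by lia. nia. Qed.

Lemma YU c (Hc : 2 <= c) b :
  (c - 1) * (loY c b + szY c b - 1) <= c * count_upto (Sb (loY c) (szY c)) (loY c b + szY c b - 1).
Proof.
  pose proof (C_block_end (loY c) (szY c) (Y_sz c Hc) (Y_lo0 c) (Y_gap c Hc) b) as E.
  rewrite E. change (loY c b) with ((2*c)^b); change (szY c b) with ((c-1)*(2*c)^b). pose proof (powc_pos c b ltac:(lia)).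
  set (X := (2 * c) ^ b) in *.
  assert (X + (c - 1) * X - 1 <= c * X) by nia.
  assert ((c-1) * (X + (c - 1) * X - 1) <= (c - 1) * (c * X)) by (apply Nat.mul_le_mono_l; auto).
  nia.
Qed.

Notation CY := (count_upto (Sb (loY 4) (szY 4))).

Lemma YL k : 1 <= k -> k <= 3 * CY k.
Proof.
  intros Hk.
  destruct (find_block (loY 4) (szY 4) (Y_sz 4 ltac:(lia)) (Y_lo0 4) (Y_gap 4 ltac:(lia)) k Hk) as [b Hb].
  change (loY 4 b) with (8^b) in Hb; change (loY 4 (S b)) with (8*8^b) in Hb.
  pose proof (powc_pos 4 b ltac:(lia)) as P8. change (2 * 4) with 8 in P8.
  destruct (Nat.lt_ge_cases k (8 ^ b + 3 * 8 ^ b)) as [Hl|Hl].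
  - pose proof (C_in_block (loY 4) (szY 4) (Y_lo0 4) (Y_gap 4 ltac:(lia)) b k) as E.
    change (loY 4 b) with (8^b) in E; change (szY 4 b) with (3*8^b) in E.
    specialize (E ltac:(lia)).
    destruct b as [|b].
    + simpl in E |- *. rewrite E. simpl. pose proof (C_le (Sb (loY 4) (szY 4)) 0). lia.
    + pose proof (C_block_end (loY 4) (szY 4) (Y_sz 4 ltac:(lia)) (Y_lo0 4) (Y_gap 4 ltac:(lia)) b) as E2.
      change (loY 4 b) with (8^b) in E2; change (szY 4 b) with (3*8^b) in E2.
      change (8 ^ S b) with (8 * 8 ^ b) in *.
      pose proof (powc_pos 4 b ltac:(lia)) as P8'. change (2 * 4) with 8 in P8'.
      pose proof (C_mono (Sb (loY 4) (szY 4)) (8 ^ b + 3 * 8 ^ b - 1) (8 * 8 ^ b - 1) ltac:(lia)).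
      lia.
  - pose proof (C_block_end (loY 4) (szY 4) (Y_sz 4 ltac:(lia)) (Y_lo0 4) (Y_gap 4 ltac:(lia)) b) as E2.
    change (loY 4 b) with (8^b) in E2; change (szY 4 b) with (3*8^b) in E2.
    pose proof (C_mono (Sb (loY 4) (szY 4)) (8 ^ b + 3 * 8 ^ b - 1) k ltac:(lia)). lia.
Qed.

Local Open Scope R_scope.

Lemma limsup_exists (u : nat -> R) : (forall k, 0 <= u k <= 1) -> exists l, is_limsup u l.
Proof.
  intros Hu.
  set (A := fun y => forall N, exists k, (k >= N)%nat /\ y <= u k).
  assert (HA0 : A 0). { intros N. exists N. split. lia. apply Hu. }
  assert (HAb : bound A). { exists 1. intros y Hy. destruct (Hy 0%nat) as [k [_ Hk]]. specialize (Hu k). lra. }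
  destruct (completeness A HAb (ex_intro _ 0 HA0)) as [l [Hub Hlub]].
  exists l. split.
  - intros eps Heps. apply NNPP. intros Hn.
    assert (A (l + eps)).
    { intros N. apply NNPP. intros Hk. apply Hn. exists N. intros k Hk'.
      apply Rnot_le_lt. intros Hle. apply Hk. exists k. split; auto. }
    specialize (Hub _ H). lra.
  - intros eps Heps N. apply NNPP. intros Hn.
    assert (is_upper_bound A (l - eps)).
    { intros y Hy. destruct (Hy N) as [k [Hk Hyk]]. apply Rnot_lt_le. intros Hlt.
      apply Hn. exists k. split; auto. lra. }
    specialize (Hlub _ H). lra.
Qed.

Lemma liminf_exists (u : nat -> R) : (forall k, 0 <= u k <= 1) -> exists l, is_liminf u l.
Proof.
  intros Hu.
  set (A := fun y => exists N, forall k, (k >= N)%nat -> y <= u k).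
  assert (HA0 : A 0). { exists 0%nat. intros k _. apply Hu. }
  assert (HAb : bound A). { exists 1. intros y [N Hy]. specialize (Hy N (le_n _)). specialize (Hu N). lra. }
  destruct (completeness A HAb (ex_intro _ 0 HA0)) as [l [Hub Hlub]].
  exists l. split.
  - intros eps Heps. apply NNPP. intros Hn.
    assert (is_upper_bound A (l - eps)).
    { intros y [N Hy]. apply Rnot_lt_le. intros Hlt. apply Hn. exists N. intros k Hk.
      specialize (Hy k Hk). lra. }
    specialize (Hlub _ H). lra.
  - intros eps Heps N. apply NNPP. intros Hn.
    assert (A (l + eps)).
    { exists N. intros k Hk. apply Rnot_lt_le. intros Hlt. apply Hn. exists k. split; auto. }
    specialize (Hub _ H). lra.
Qed.

Lemma limsup_ge u l c : is_limsup u l -> (forall N, exists k, (k >= N)%nat /\ c <= u k) -> c <= l.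
Proof.
  intros [H1 _] Hc. apply Rnot_lt_le. intros H.
  destruct (H1 (c - l) ltac:(lra)) as [N HN]. destruct (Hc N) as [k [Hk Hck]].
  specialize (HN k Hk). lra.
Qed.

Lemma liminf_ge u l c : is_liminf u l ->
  (forall d, d > 0 -> exists N, forall k, (k >= N)%nat -> c - d <= u k) -> c <= l.
Proof.
  intros [_ H2] Hc. apply Rnot_lt_le. intros H.
  destruct (Hc ((c - l)/2) ltac:(lra)) as [N HN].
  destruct (H2 ((c - l)/2) ltac:(lra) N) as [k [Hk Hk2]].
  specialize (HN k Hk). lra.
Qed.

Lemma limsup_le1 u l : is_limsup u l -> (forall k, u k <= 1) -> l <= 1.
Proof.
  intros [_ H2] Hu. apply Rnot_lt_le. intros H.
  destruct (H2 (l - 1) ltac:(lra) 0%nat) as [k [_ Hk]]. specialize (Hu k). lra.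
Qed.

Lemma liminf_le1 u l : is_liminf u l -> (forall k, u k <= 1) -> l <= 1.
Proof.
  intros [H1 _] Hu. apply Rnot_lt_le. intros H.
  destruct (H1 (l - 1) ltac:(lra)) as [N HN]. specialize (HN N (le_n _)). specialize (Hu N). lra.
Qed.

Lemma dens_bounds T k : 0 <= dens_seq T k <= 1.
Proof.
  unfold dens_seq. pose proof (C_le T k).
  destruct k as [|k].
  - simpl. unfold Rdiv. rewrite Rmult_0_l. lra.
  - assert (Hk : 0 < INR (S k)) by (apply lt_0_INR; lia).
    apply le_INR in H. pose proof (pos_INR (count_upto T (S k))).
    split.
    + unfold Rdiv. apply Rmult_le_pos; [lra | left; apply Rinv_0_lt_compat; lra].
    + apply Rmult_le_reg_r with (INR (S k)); auto. unfold Rdiv. rewrite Rmult_assoc, Rinv_l by lra. lra.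
Qed.

Lemma dens_ge T k p q : (0 < k)%nat -> (0 < q)%nat -> (p * k <= q * count_upto T k)%nat ->
  INR p / INR q <= dens_seq T k.
Proof.
  intros Hk Hq H. unfold dens_seq.
  assert (0 < INR k) by (apply lt_0_INR; lia). assert (0 < INR q) by (apply lt_0_INR; lia).
  apply le_INR in H. rewrite !mult_INR in H.
  apply Rmult_le_reg_l with (INR q * INR k). nra.
  replace (INR q * INR k * (INR p / INR q)) with (INR p * INR k) by (field; lra).
  replace (INR q * INR k * (INR (count_upto T k) / INR k)) with (INR q * INR (count_upto T k)) by (field; lra).
  lra.
Qed.

Lemma lub_ge (E : R -> Prop) c : (forall x, E x -> x <= 1) -> (exists x, E x /\ c <= x) ->
  exists a, is_lub E a /\ c <= a.
Proof.
  intros Hb [x [Ex Hx]].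
  assert (HB : bound E) by (exists 1; intros y Hy; apply Hb; auto).
  destruct (completeness E HB (ex_intro _ x Ex)) as [a Ha].
  exists a. split; auto. destruct Ha as [Hu _]. specialize (Hu x Ex). lra.
Qed.

Definition SX := Sb loX szX.
Definition SY c := Sb (loY c) (szY c).

Lemma SX_3free : n_free 3 SX.
Proof. exact (blocks_3free loX szX X_sz X_lo0 X_gap X_H3). Qed.
Lemma SY_4free c : (2 <= c)%nat -> n_free 4 (SY c).
Proof. intros Hc. exact (blocks_4free (loY c) (szY c) (Y_sz c Hc) (Y_lo0 c) (Y_gap c Hc)). Qed.

Lemma X_limsup l : upper_density SX l -> 1/2 <= l.
Proof.
  intros Hl. replace (1/2) with (INR 1 / INR 2) by (simpl; field).
  apply (limsup_ge _ _ _ Hl). intros N.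
  exists (3 ^ S N - 1)%nat. pose proof (Nat.pow_gt_lin_r 3 (S N) ltac:(lia)). split. lia.
  apply dens_ge. lia. lia. pose proof (XU N). unfold SX. lia.
Qed.

Lemma X_liminf l : lower_density SX l -> 1/4 <= l.
Proof.
  intros Hl. apply (liminf_ge _ _ _ Hl). intros d Hd.
  destruct (INR_unbounded (/ d)) as [n Hn].
  exists (Nat.max n 2). intros k Hk.
  pose proof (XB k ltac:(lia)) as HB. fold SX in HB.
  unfold dens_seq.
  assert (HK : INR n <= INR k) by (apply le_INR; lia).
  assert (HK2 : 2 <= INR k) by (replace 2 with (INR 2) by (simpl; lra); apply le_INR; lia).
  apply le_INR in HB. rewrite plus_INR, mult_INR in HB. simpl in HB.
  set (K := INR k) in *. set (Cr := INR (count_upto SX k)) in *.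
  assert (dK : d * K > 1).
  { assert (d * K > d * / d) by (apply Rmult_lt_compat_l; lra). rewrite Rinv_r in H by lra. lra. }
  apply Rmult_le_reg_r with K. lra.
  replace (Cr / K * K) with Cr by (field; lra). nra.
Qed.

Lemma Y_limsup c l : (2 <= c)%nat -> upper_density (SY c) l -> INR (c - 1) / INR c <= l.
Proof.
  intros Hc Hl. apply (limsup_ge _ _ _ Hl). intros N.
  exists (loY c N + szY c N - 1)%nat.
  pose proof (Nat.pow_gt_lin_r (2 * c) N ltac:(lia)). pose proof (Y_sz c Hc N).
  unfold loY at 1. split. lia.
  apply dens_ge. unfold loY. lia. lia. pose proof (YU c Hc N). unfold SY. lia.
Qed.

Lemma Y_liminf l : lower_density (SY 4) l -> 1/3 <= l.
Proof.
  intros Hl. apply (liminf_ge _ _ _ Hl). intros d Hd. exists 1%nat. intros k Hk.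
  assert (INR 1 / INR 3 <= dens_seq (SY 4) k).
  { apply dens_ge. lia. lia. pose proof (YL k Hk). unfold SY. lia. }
  replace (INR 1 / INR 3) with (1/3) in H by (simpl; field). lra.
Qed.

Theorem theorem3 :
  is_alpha 4 1 /\
  (exists a, is_alpha 3 a /\ 1/2 <= a) /\
  (exists b, is_beta 4 b /\ 1/3 <= b) /\
  (exists b, is_beta 3 b /\ 1/4 <= b).
Proof.
  split; [|split; [|split]].
  - split.
    + intros x [T [_ Hx]]. apply (limsup_le1 _ _ Hx). intros; apply dens_bounds.
    + intros b Hb. apply Rnot_lt_le. intros Hlt.
      destruct (INR_unbounded (/ (1 - b))) as [n Hn].
      destruct (limsup_exists (dens_seq (SY (S (S n)))) (dens_bounds _)) as [l Hl].
      pose proof (Y_limsup (S (S n)) l ltac:(lia) Hl) as Hyl.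
      assert (l <= b) by (apply Hb; exists (SY (S (S n))); split; [apply SY_4free; lia|exact Hl]).
      replace (S (S n) - 1)%nat with (S n) in Hyl by lia.
      rewrite (S_INR (S n)) in Hyl. rewrite S_INR in Hyl.
      set (m := INR n + 1) in *.
      assert (Hm : m > / (1 - b)) by (unfold m; lra).
      assert (Hm1 : m * (1 - b) > 1).
      { assert (m * (1 - b) > / (1 - b) * (1 - b)) by (apply Rmult_lt_compat_r; lra).
        rewrite Rinv_l in H0 by lra. lra. }
      assert (Hpos : 0 < m) by (pose proof (pos_INR n); unfold m; lra).
      assert (b < m / (m + 1)).
      { apply Rmult_lt_reg_r with (m + 1). lra.
        replace (m / (m + 1) * (m + 1)) with m by (field; lra). nra. }
      lra.
  - apply lub_ge.
    + intros x [T [_ Hx]]. apply (limsup_le1 _ _ Hx). intros; apply dens_bounds.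
    + destruct (limsup_exists (dens_seq SX) (dens_bounds _)) as [l Hl].
      exists l. split. exists SX. split; [apply SX_3free|exact Hl]. apply X_limsup; auto.
  - apply lub_ge.
    + intros x [T [_ Hx]]. apply (liminf_le1 _ _ Hx). intros; apply dens_bounds.
    + destruct (liminf_exists (dens_seq (SY 4)) (dens_bounds _)) as [l Hl].
      exists l. split. exists (SY 4). split; [apply SY_4free; lia|exact Hl]. apply Y_liminf; auto.
  - apply lub_ge.
    + intros x [T [_ Hx]]. apply (liminf_le1 _ _ Hx). intros; apply dens_bounds.
    + destruct (liminf_exists (dens_seq SX) (dens_bounds _)) as [l Hl].
      exists l. split. exists SX. split; [apply SX_3free|exact Hl]. apply X_liminf; auto.
Qed.
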